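(* Let $\rho:\mathfrak g\to\mathfrak{gl}(V)$ be a representation of a Lie algebra $\mathfrak g$. Define $\Phi:\mathrm{Hom}(\wedge^kV,\mathfrak g)\to\mathrm{Hom}(\wedge^kV\otimes V,V)$, $k\ge0$, by $\Phi(f)(u_1,\dots,u_k,u_{k+1})=\rho(f(u_1,\dots,u_k))(u_{k+1})$. Then $\Phi$ is a homomorphism of graded Lie algebras from $(\mathcal C^*(V,\mathfrak g),[\![\cdot,\cdot]\!])$ to $(C^*(V,V),[\cdot,\cdot]^C)$, i.e. $\Phi([\![P,Q]\!])=[\Phi(P),\Phi(Q)]^C$ for all $P\in\mathrm{Hom}(\wedge^nV,\mathfrak g)$, $Q\in\mathrm{Hom}(\wedge^mV,\mathfrak g)$.
   Context: All vector spaces finite-dimensional over an algebraically closed field of characteristic $0$. $\mathbb S_{(i_1,\dots,i_k)}$ denotes unshuffles (permutations increasing on consecutive blocks of sizes $i_1,\dots,i_k$). $\mathcal C^*(V,\mathfrak g)=\bigoplus_k\mathrm{Hom}(\wedge^kV,\mathfrak g)$ with bracket $[\![P,Q]\!](u_1,\dots,u_{m+n})=\sum_{\sigma\in\mathbb S_{(m,1,n-1)}}(-1)^{\sigma}P(\rho(Q(u_{\sigma(1)},\dots,u_{\sigma(m)}))u_{\sigma(m+1)},u_{\sigma(m+2)},\dots,u_{\sigma(m+n)})-(-1)^{mn}\sum_{\sigma\in\mathbb S_{(n,1,m-1)}}(-1)^{\sigma}Q(\rho(P(u_{\sigma(1)},\dots,u_{\sigma(n)}))u_{\sigma(n+1)},u_{\sigma(n+2)},\dots,u_{\sigma(m+n)})+(-1)^{mn}\sum_{\sigma\in\mathbb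 S_{(n,m)}}(-1)^{\sigma}[P(u_{\sigma(1)},\dots,u_{\sigma(n)}),Q(u_{\sigma(n+1)},\dots,u_{\sigma(m+n)})]$ for $P\in\mathrm{Hom}(\wedge^nV,\mathfrak g)$, $Q\in\mathrm{Hom}(\wedge^mV,\mathfrak g)$. $C^*(V,V)=\bigoplus_{k\ge0}\mathrm{Hom}(\wedge^kV\otimes V,V)$; for $\alpha\in\mathrm{Hom}(\wedge^nV\otimes V,V)$, $\beta\in\mathrm{Hom}(\wedge^mV\otimes V,V)$, define $(\alpha\circ\beta)(u_1,\dots,u_{m+n+1})=\sum_{\sigma\in\mathbb S_{(m,1,n-1)}}(-1)^{\sigma}\alpha(\beta(u_{\sigma(1)},\dots,u_{\sigma(m+1)}),u_{\sigma(m+2)},\dots,u_{\sigma(m+n)},u_{m+n+1})+(-1)^{mn}\sum_{\sigma\in\mathbb S_{(n,m)}}(-1)^{\sigma}\alpha(u_{\sigma(1)},\dots,u_{\sigma(n)},\beta(u_{\sigma(n+1)},\dots,u_{\sigma(m+n)},u_{m+n+1}))$ and $[\alpha,\beta]^C=\alpha\circ\beta-(-1)^{mn}\beta\circ\alpha$; this is a graded Lie algebra with $\mathrm{Hom}(\wedge^kV\otimes V,V)$ in degree $k$. *)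

(* Defs.v *)
From HB Require Import structures.
From mathcomp Require Import all_boot all_order all_algebra all_fingroup all_field.
Set Implicit Arguments. Unset Strict Implicit. Unset Printing Implicit Defensive.
Import GRing.Theory.
Local Open Scope ring_scope.

(* Cochains of arity k are functions ('I_k -> W') -> W : argument i (0-based)
   is u i.  Hom(/\^k V, W) = multilinear alternating such functions. *)

Section Cochains.
Variables (K : fieldType) (V g : vectType K).

Definition multilinear (W : lmodType K) k (f : ('I_k -> V) -> W) : Prop :=
  forall (u : 'I_k -> V) (i : 'I_k) (a : K) (x y : V),
    f (fun j => if j == i then a *: x + y else u j)
    = a *: f (fun j => if j == i then x else u j)
      + f (fun j => if j == i then y else u j).

Definition alternating (W : lmodType K) k (f : ('I_k -> V) -> W) : Prop :=
  forall (u : 'I_k -> V) (i j : 'I_k), i != j -> u i = u j -> f u = 0.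

Fixpoint blk (bs : seq nat) (i : nat) : nat :=
  if bs is b :: bs' then (if i < b then 0 else (blk bs' (i - b)).+1)%N else 0%N.

Definition unshuffle N (bs : seq nat) (s : 'S_N) : bool :=
  [forall i : 'I_N, forall j : 'I_N,
     ((i < j)%N && (blk bs i == blk bs j)) ==> (s i < s j)%N].

Definition permseq N (u : 'I_N -> V) (s : 'S_N) : seq V :=
  [seq u (s i) | i <- enum 'I_N].

Definition sgn N (s : 'S_N) : K := (-1) ^+ odd_perm s.

Definition lie_bracket_C (br : g -> g -> g) (rho : g -> 'End(V)) (n m : nat)
  (P : ('I_n -> V) -> g) (Q : ('I_m -> V) -> g) : ('I_(m + n) -> V) -> g :=
  fun u =>
    (if n is 0 then 0 else
     \sum_(s : 'S_(m + n) | unshuffle [:: m; 1; n.-1]%N s)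
        sgn s *: P (fun i : 'I_n =>
          if val i == 0%N
          then rho (Q (fun j : 'I_m => nth 0 (permseq u s) j)) (nth 0 (permseq u s) m)
          else nth 0 (permseq u s) (m + i)))
    - (-1) ^+ (m * n) *:
    (if m is 0 then 0 else
     \sum_(s : 'S_(m + n) | unshuffle [:: n; 1; m.-1]%N s)
        sgn s *: Q (fun i : 'I_m =>
          if val i == 0%N
          then rho (P (fun j : 'I_n => nth 0 (permseq u s) j)) (nth 0 (permseq u s) n)
          else nth 0 (permseq u s) (n + i)))
    + (-1) ^+ (m * n) *:
     \sum_(s : 'S_(m + n) | unshuffle [:: n; m] s)
        sgn s *: br (P (fun j : 'I_n => nth 0 (permseq u s) j))
                    (Q (fun j : 'I_m => nth 0 (permseq u s) (n + j))).

(* alpha o beta on C^*(V,V): alpha in Hom(/\^n V (x) V, V) (arity n+1),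
   beta in Hom(/\^m V (x) V, V) (arity m+1); result has arity m+n+1 *)
Definition circC (n m : nat) (alpha : ('I_n.+1 -> V) -> V)
  (beta : ('I_m.+1 -> V) -> V) : ('I_(m + n).+1 -> V) -> V :=
  fun u =>
    let w : 'I_(m + n) -> V := fun i => u (widen_ord (leqnSn _) i) in
    let last := u ord_max in
    (if n is 0 then 0 else
     \sum_(s : 'S_(m + n) | unshuffle [:: m; 1; n.-1]%N s)
        sgn s *: alpha (fun i : 'I_n.+1 =>
          if val i == 0%N then beta (fun j : 'I_m.+1 => nth 0 (permseq w s) j)
          else if val i == n then last
          else nth 0 (permseq w s) (m + i)))
    + (-1) ^+ (m * n) *:
     \sum_(s : 'S_(m + n) | unshuffle [:: n; m] s)
        sgn s *: alpha (fun i : 'I_n.+1 =>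
          if (val i < n)%N then nth 0 (permseq w s) i
          else beta (fun j : 'I_m.+1 =>
                 if (val j < m)%N then nth 0 (permseq w s) (n + j) else last)).

Definition bracketC (n m : nat) (alpha : ('I_n.+1 -> V) -> V)
  (beta : ('I_m.+1 -> V) -> V) : ('I_(m + n).+1 -> V) -> V :=
  fun u => circC alpha beta u
    - (-1) ^+ (m * n) *:
      circC beta alpha (fun i => u (cast_ord (congr1 succn (addnC n m)) i)).

Definition Phi (rho : g -> 'End(V)) (k : nat) (f : ('I_k -> V) -> g)
  : ('I_k.+1 -> V) -> V :=
  fun u => rho (f (fun i => u (widen_ord (leqnSn k) i))) (u ord_max).

End Cochains.

(* Main.v *)
Require Import Defs.
From HB Require Import structures.
From mathcomp Require Import all_boot all_order all_algebra all_fingroup all_field.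
From mathcomp Require Import zify.
From Stdlib Require Import FunctionalExtensionality.
Set Implicit Arguments. Unset Strict Implicit. Unset Printing Implicit Defensive.
Import GRing.Theory.
Local Open Scope ring_scope.

Section Helpers.
Variables (K : fieldType) (V : vectType K).

Lemma nth_permseq N (w : 'I_N -> V) (s : 'S_N) i (hi : (i < N)%N) :
  nth 0 (permseq w s) i = w (s (Ordinal hi)).
Proof.
rewrite /permseq (nth_map (Ordinal hi)) ?size_enum_ord //.
by congr (w (s _)); apply: val_inj; rewrite /= nth_enum_ord.
Qed.

Lemma rot_exists N a : exists r : 'S_N,
  (forall i, val (r i) = (i + a) %% N)%N /\ odd_perm r = odd (a * N.-1).
Proof.
case: N => [|k].
  by exists 1%g; split => [[]//|]; rewrite odd_perm1 muln0.
pose r1 : 'S_k.+1 := lift_perm ord_max ord0 1%g.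
have hr1 : forall i : 'I_k.+1, val (r1 i) = ((i + 1) %% k.+1)%N.
  move=> i; case: (unliftP ord_max i) => [j ->|->].
    rewrite /r1 lift_perm_lift perm1 /= /bump /=.
    have hj := ltn_ord j; rewrite leqNgt hj /= add0n addn1 add1n modn_small //.
  by rewrite /r1 lift_perm_id /= addn1 modnn.
have or1 : odd_perm r1 = odd k :> bool.
  by rewrite /r1 odd_lift_perm odd_perm1 /= addbF addbF.
exists (r1 ^+ a)%g; elim: a => [|a [IH1 IH2]].
  by split => [i|]; rewrite ?expg0 ?perm1 ?odd_perm1 ?addn0 ?modn_small.
split=> [i|].
  by rewrite expgSr permM hr1 IH1 modnDml addn1 addnS.
have -> : (r1 ^+ a.+1 = r1 ^+ a * r1)%g by rewrite expgSr.
by rewrite odd_permM IH2 or1 /= mulSn oddD addbC.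
Qed.

Lemma blk2 a b i : (i < a + b)%N -> blk [:: a; b] i = (a <= i)%N.
Proof.
move=> h /=; case: ltnP => hi //=.
by have -> : (i - a < b)%N by lia.
Qed.

Lemma rot_val a b (r : 'S_(a + b)) (hr : forall i, val (r i) = ((i + a) %% (a + b))%N)
  (i : 'I_(a + b)) : val (r i) = if (i < b)%N then (i + a)%N else (i - b)%N.
Proof.
rewrite hr; have hi := ltn_ord i; case: ltnP => h.
  by rewrite modn_small //; lia.
have -> : (i + a = (i - b) + (a + b))%N by lia.
by rewrite modnDr modn_small //; lia.
Qed.

Lemma unsh_rot N a b (hN : (a + b)%N = N) (r : 'S_N)
  (hr : forall i, val (r i) = ((i + a) %% N)%N) (s : 'S_N) :
  unshuffle [:: a; b] s -> unshuffle [:: b; a] (r * s)%g.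
Proof.
subst N; move=> /forallP hs; apply/forallP => i; apply/forallP => j.
apply/implyP => /andP [hij hb]; rewrite !permM.
apply: (implyP (forallP (hs (r i)) (r j))).
have hi := ltn_ord i; have hj := ltn_ord j.
have hri := ltn_ord (r i); have hrj := ltn_ord (r j).
move: hb; rewrite blk2 ?(addnC b) // blk2 ?(addnC b) // blk2 // blk2 //.
rewrite !(rot_val hr).
case: (ltnP i b) => h1; case: (ltnP j b) => h2 /= hb; apply/andP; split;
  try lia; apply/eqP; move/eqP: hb; lia.
Qed.

Lemma sum_cast N N' (e : N = N') bs (w : 'I_N -> V) (w' : 'I_N' -> V)
  (hw : forall i, w' (cast_ord e i) = w i) (F : seq V -> K -> V) :
  \sum_(s : 'S_N' | unshuffle bs s) F (permseq w' s) (sgn K s)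
  = \sum_(s : 'S_N | unshuffle bs s) F (permseq w s) (sgn K s).
Proof.
subst N'; apply: eq_bigr => s _; congr F.
by rewrite /permseq; apply: eq_map => i; rewrite -hw cast_ord_id.
Qed.

Lemma rhoZ (g : vectType K) (rho : {linear g -> 'End(V)}) (a : K) (x : g) (L : V) :
  rho (a *: x) L = a *: rho x L.
Proof. by rewrite linearZ scale_lfunE. Qed.

Lemma rho_sum (g : vectType K) (rho : {linear g -> 'End(V)}) (I : finType) (Pr : pred I) (F : I -> g) (L : V) :
  rho (\sum_(i | Pr i) F i) L = \sum_(i | Pr i) rho (F i) L.
Proof. by rewrite raddf_sum sum_lfunE. Qed.

Lemma unsh_cast N N' (e : N = N') bs (s : 'S_N) :
  unshuffle bs (cast_perm e s) = unshuffle bs s.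
Proof. by subst N'; rewrite cast_perm_id. Qed.

Lemma sgn_cast N N' (e : N = N') (s : 'S_N) : sgn K (cast_perm e s) = sgn K s.
Proof. by subst N'; rewrite cast_perm_id. Qed.

Lemma permseq_cast N N' (e : N = N') (w : 'I_N -> V) (w' : 'I_N' -> V)
  (hw : forall i, w' (cast_ord e i) = w i) (s : 'S_N) :
  permseq w' (cast_perm e s) = permseq w s.
Proof.
subst N'; rewrite cast_perm_id /permseq; apply: eq_map => i.
by rewrite -hw cast_ord_id.
Qed.

Lemma odd_rot m n : odd (m * (m + n).-1) = odd (n * m).
Proof.
case: m => [|k]; first by rewrite !muln0.
rewrite addSn /= !oddM oddD /=.
by case: (odd k); case: (odd n).
Qed.

Lemma swap_sum m n (w : 'I_(m + n) -> V) (F : ('I_n -> V) -> ('I_m -> V) -> V) :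
  \sum_(t | unshuffle [:: n; m] t) sgn K t *:
     F (fun j : 'I_n => nth 0 (permseq w t) j) (fun j : 'I_m => nth 0 (permseq w t) (n + j))
  = (-1) ^+ (n * m) *: \sum_(s | unshuffle [:: m; n] s) sgn K s *:
     F (fun j : 'I_n => nth 0 (permseq w s) (m + j)) (fun j : 'I_m => nth 0 (permseq w s) j).
Proof.
have [r [hr hodd]] := rot_exists (m + n) m.
have [r' [hr' _]] := rot_exists (m + n) n.
rewrite (reindex (mulg r)); last first.
  exact: onW_bij (Bijective (mulKg r) (mulKVg r)).
rewrite scaler_sumr; apply: eq_big => [s|s _].
  apply/idP/idP; last exact: unsh_rot.
  move=> /(unsh_rot (addnC n m) hr').
  have -> : (r' * (r * s) = s)%g.
    rewrite mulgA; have -> : (r' * r = 1)%g; last by rewrite mul1g.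
    apply/permP => i; apply: val_inj; rewrite permM perm1 hr hr' modnDml -addnA.
    by rewrite (addnC n m) modnDr modn_small.
  by [].
rewrite /sgn odd_permM signr_addb hodd odd_rot signr_odd scalerA.
congr (_ *: F _ _); apply: functional_extensionality => j.
  have h1 : (j < m + n)%N by have := ltn_ord j; lia.
  have h2 : (m + j < m + n)%N by have := ltn_ord j; lia.
  rewrite (nth_permseq _ _ h1) (nth_permseq _ _ h2) permM; congr (w (s _)).
  by apply: val_inj; rewrite (rot_val hr) /= ifT // addnC.
have h1 : (n + j < m + n)%N by have := ltn_ord j; lia.
have h2 : (j < m + n)%N by have := ltn_ord j; lia.
rewrite (nth_permseq _ _ h1) (nth_permseq _ _ h2) permM; congr (w (s _)).
by apply: val_inj; rewrite (rot_val hr) /= ifF; [lia | apply/negbTE; lia].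
Qed.

Lemma alg_comb (g : vectType K) (rho : {linear g -> 'End(V)}) (a b d : g) (L y1 y2 y3a y3b : V) (c c' : K) :
  rho a L = y1 -> rho b L = y2 -> rho d L = y3a - c' *: y3b ->
  rho (a - c *: b + c *: d) L = y1 + c *: y3a - c *: (y2 + c' *: y3b).
Proof.
move=> h1 h2 h3.
have -> : rho (a - c *: b + c *: d) L = rho a L - c *: rho b L + c *: rho d L.
  rewrite !raddfD /= raddfN /= !linearZ /= !add_lfunE !scale_lfunE.
  by congr (_ + _ *: _ + _); exact: opp_lfunE.
rewrite h1 h2 h3 !scalerBr !scalerDr !opprD ?opprK.
by rewrite !addrA; congr (_ + _); rewrite addrAC.
Qed.
End Helpers.

Theorem proposition2p8 (K : closedFieldType) (charK0 : [pchar K] =i pred0)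
  (V g : vectType K) (br : g -> g -> g)
  (br_linl : forall (a : K) (x y z : g), br (a *: x + y) z = a *: br x z + br y z)
  (br_linr : forall (a : K) (x y z : g), br z (a *: x + y) = a *: br z x + br z y)
  (br_alt : forall x : g, br x x = 0)
  (br_jacobi : forall x y z : g,
     br x (br y z) + br y (br z x) + br z (br x y) = 0)
  (rho : {linear g -> 'End(V)})
  (rho_hom : forall x y : g,
     rho (br x y) = ((rho x \o rho y)%VF - (rho y \o rho x)%VF))
  (n m : nat) (P : ('I_n -> V) -> g) (Q : ('I_m -> V) -> g)
  (P_ml : multilinear P) (P_alt : alternating P)
  (Q_ml : multilinear Q) (Q_alt : alternating Q) :
  forall u : 'I_(m + n).+1 -> V,
    Phi rho (lie_bracket_C br rho P Q) u
    = bracketC (Phi rho P) (Phi rho Q) u.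
Proof.
move=> u; rewrite /Phi /bracketC /lie_bracket_C /circC /=.
set w := (fun i => u (widen_ord _ i)).
set L := u ord_max.
apply: alg_comb.
- destruct n as [|n'].
    by rewrite raddf0 zero_lfunE.
  rewrite rho_sum; apply: eq_bigr => s _.
  rewrite rhoZ /= eqxx; congr (_ *: rho (P _) _).
  apply: functional_extensionality => i; case: eqP => // _.
  by rewrite ltn_eqF.
- destruct m as [|m'].
    by rewrite raddf0 zero_lfunE.
  rewrite rho_sum [in RHS](reindex (cast_perm (addnC m'.+1 n))); last first.
    exact: onW_bij (Bijective (cast_permK _) (cast_permKV _)).
  apply: eq_big => [s|s _]; first by rewrite unsh_cast.
  have hL : u (cast_ord (congr1 succn (addnC n m'.+1)) ord_max) = L.
    by rewrite /L; apply: (congr1 u); apply: val_inj; rewrite /= addnC.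
  rewrite sgn_cast (permseq_cast (w := w)); last first.
    by move=> i; apply: (congr1 u); apply: val_inj.
  rewrite rhoZ /= eqxx hL; congr (_ *: rho (Q _) _).
  apply: functional_extensionality => i; case: eqP => // _.
  by rewrite ltn_eqF.
- rewrite rho_sum [in RHS](reindex (cast_perm (addnC m n))); last first.
    exact: onW_bij (Bijective (cast_permK _) (cast_permKV _)).
  pose F := fun (x : 'I_n -> V) (y : 'I_m -> V) => rho (Q y) (rho (P x) L).
  transitivity (\sum_(t | unshuffle [:: n; m] t) sgn K t *:
      rho (P (fun j : 'I_n => nth 0 (permseq w t) j))
          (rho (Q (fun j : 'I_m => nth 0 (permseq w t) (n + j))) L)
    - \sum_(t | unshuffle [:: n; m] t) sgn K t *:
      F (fun j : 'I_n => nth 0 (permseq w t) j) (fun j : 'I_m => nth 0 (permseq w t) (n + j))).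
    rewrite -sumrB; apply: eq_bigr => t _; rewrite rhoZ rho_hom -scalerBr; congr (_ *: _).
    rewrite /F -!comp_lfunE add_lfunE; congr (_ + _); exact: opp_lfunE.
  rewrite (swap_sum w F); congr (_ - _ *: _).
    apply: eq_bigr => t _; rewrite !ltnn; congr (_ *: rho (P _) (rho (Q _) _)).
      by apply: functional_extensionality => i; rewrite ltn_ord.
    by apply: functional_extensionality => i; rewrite ltn_ord.
  apply: eq_big => [s|s _]; first by rewrite unsh_cast.
  have hL : u (cast_ord (congr1 succn (addnC n m)) ord_max) = L.
    by rewrite /L; apply: (congr1 u); apply: val_inj; rewrite /= addnC.
  rewrite sgn_cast (permseq_cast (w := w)); last first.
    by move=> i; apply: (congr1 u); apply: val_inj.
  rewrite !ltnn hL /F; congr (_ *: rho (Q _) (rho (P _) _)).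
    by apply: functional_extensionality => i; rewrite ltn_ord.
  by apply: functional_extensionality => i; rewrite ltn_ord.
Qed.
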